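(* Let $\epsilon>0$, $\delta\ge0$, $n\ge1$, let $\mathscr X$ be any set, and let $T:\mathscr X^n\to\mathbb{Z}$ satisfy $\sup|T(X)-T(X')|=1$, where the supremum is over all pairs $(X,X')\in\mathscr X^n\times\mathscr X^n$ with Hamming distance $\delta(X,X')=1$. Then the set of distributions $\big\{\mathrm{Tulap}\big(T(X),b=e^{-\epsilon},\tfrac{2\delta b}{1-b+2\delta b}\big)\ \big|\ X\in\mathscr X^n\big\}$ satisfies $(\epsilon,\delta)$-differential privacy.
   Context: The Hamming distance on $\mathscr X^n$ is $\delta(X,X')=\#\{i: X_i\ne X'_i\}$. A family $\{P_X: X\in\mathscr X^n\}$ of probability measures on a measurable space $(\mathscr Y,\mathscr F)$ satisfies $(\epsilon,\delta)$-differential privacy if for every $B\in\mathscr F$ and all $X,X'\in\mathscr X^n$ with $\delta(X,X')=1$, $P_X(B)\le e^\epsilon P_{X'}(B)+\delta$. Nearest integer function: $[t]$ is the integer nearest to $t$, with $[z+1/2]$ ($z\in\mathbb{Z}$) defined as the nearest even integer. Tulap distribution: for $m\in\mathbb{R}$, $b\in(0,1)$, $q\in[0,1)$, $N_0\sim\mathrm{Tulap}(m,b,0)$ has cdf $F_{N_0}(x)=\frac{b^{-[x-m]}}{1+b}\big(b+(x-m-[x-m]+\tfrac12)(1-b)\big)$ for $x\leq [m]$ and $F_{N_0}(x)=1-\frac{b^{[x-m]}}{1+b}\big(b+([x-m]-(x-m)+\tfrac12)(1-b)\big)$ for $x>[m]$; and $N\sim \mathrm{Tulap}(m,b,q)$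 has cdf $F_N(x)=\frac{F_{N_0}(x)-q/2}{1-q}\,I\{q/2\leq F_{N_0}(x)\leq 1-q/2\}+I\{F_{N_0}(x)>1-q/2\}$. *)

(* Defs.v *)
From HB Require Import structures.
From mathcomp Require Import all_boot all_order all_algebra.
From mathcomp Require Import all_classical all_reals all_analysis.
Set Implicit Arguments. Unset Strict Implicit. Unset Printing Implicit Defensive.
Import Order.TTheory GRing.Theory Num.Theory.
Local Open Scope ring_scope.

Definition nearest_int {R : realType} (t : R) : int :=
  let f := Num.floor t in
  let fr := t - f%:~R in
  if fr < 2^-1 then f
  else if 2^-1 < fr then f + 1
  else (if ~~ odd `|f|%N then f else f + 1).

Definition tulap0_cdf {R : realType} (m b x : R) : R :=
  let k := nearest_int (x - m) in
  if x <= (nearest_int m)%:~R then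
    b ^ (- k) / (1 + b) * (b + (x - m - k%:~R + 2^-1) * (1 - b))
  else
    1 - b ^ k / (1 + b) * (b + (k%:~R - (x - m) + 2^-1) * (1 - b)).

Definition tulap_cdf {R : realType} (m b q x : R) : R :=
  let F0 := tulap0_cdf m b x in
  (if (q / 2 <= F0) && (F0 <= 1 - q / 2) then (F0 - q / 2) / (1 - q) else 0)
  + (if F0 > 1 - q / 2 then 1 else 0).

Definition hamming {Xs : Type} {n : nat} (X X' : 'I_n -> Xs) : nat :=
  #|[pred i : 'I_n | ~~ `[< X i = X' i >]]|.

Definition diff_private {R : realType} {Xs : Type} {n : nat}
    (eps delta : R) (P : ('I_n -> Xs) -> probability R R) : Prop :=
  forall (B : set R), measurable B ->
  forall X X' : 'I_n -> Xs, hamming X X' = 1%N ->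
    (P X B <= (expR eps)%:E * P X' B + delta%:E)%E.

(* Main.v *)
Require Import Defs.
From HB Require Import structures.
From mathcomp Require Import all_boot all_order all_algebra.
From mathcomp Require Import all_classical all_reals all_analysis.
From mathcomp Require Import ring lra zify.
Import Order.TTheory GRing.Theory Num.Theory.
Import numFieldTopology.Exports numFieldNormedType.Exports.
Local Open Scope classical_set_scope.
Local Open Scope ring_scope.
Set Implicit Arguments. Unset Strict Implicit.

Section NI.
Variable R : realType.

Lemma NI (x : R) : (nearest_int x)%:~R - 2^-1 <= x <= (nearest_int x)%:~R + 2^-1.
Proof.
rewrite /nearest_int; have h1 := floor_le x; have h2 := floorD1_gt x.
rewrite intrD in h2.
case: ifP => [h|h0]; first by apply/andP; split; lra.
case: ifP => [h|h]; first by rewrite intrD; apply/andP; split; lra.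
have e : x - (Num.floor x)%:~R = 2^-1.
  apply/eqP; rewrite eq_le; apply/andP; split; first by rewrite leNgt h.
  by rewrite leNgt h0.
case: ifP => _; rewrite ?intrD; apply/andP; split; lra.
Qed.

Lemma NI_int (z : int) : nearest_int (z%:~R : R) = z.
Proof.
rewrite /nearest_int intrKfloor subrr.
have -> : (0 : R) < 2^-1 by lra.
done.
Qed.

Definition cell (x : R) (k : int) := k%:~R - 2^-1 <= x <= k%:~R + 2^-1.

Lemma cell_cases (x : R) (k j : int) : cell x k -> cell x j ->
  [\/ k = j, j = k + 1 /\ x = k%:~R + 2^-1 | k = j + 1 /\ x = j%:~R + 2^-1].
Proof.
move=> /andP[a1 a2] /andP[b1 b2].
have h1 : k%:~R <= (j + 1)%:~R :> R by rewrite intrD; lra.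
have h2 : j%:~R <= (k + 1)%:~R :> R by rewrite intrD; lra.
rewrite ler_int in h1; rewrite ler_int in h2.
have [e|ne] := eqVneq k j; first by constructor 1.
have [e|ne2] := eqVneq j (k + 1).
  constructor 2; split => //; rewrite e intrD in b1; lra.
have e : k = j + 1 by lia.
constructor 3; split => //; rewrite e intrD in a1; lra.
Qed.

End NI.


Section Tul.
Variable R : realType.
Variable b : R.
Hypothesis b0 : 0 < b.
Hypothesis b1 : b < 1.
Ltac bb5 := have := b0; have := b1; move=> ? ?.

Definition Lftul (x : R) (k : int) := b ^ (- k) / (1 + b) * (b + (x - k%:~R + 2^-1) * (1 - b)).
Definition Sftul (x : R) (k : int) := b ^ k / (1 + b) * (b + (k%:~R - x + 2^-1) * (1 - b)).
Definition Ltul (x : R) := tulap0_cdf 0 b x.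

Lemma bne0 : b != 0. Proof. by rewrite gt_eqF. Qed.

Lemma bp1 : 1 + b != 0. Proof. bb5; have h : 0 < 1 + b by lra. by rewrite gt_eqF. Qed.

Lemma powS (k : int) : b ^ (k + 1) = b ^ k * b.
Proof. by rewrite expfzDr ?bne0 // expr1z. Qed.

Lemma Lf_tie (k : int) (x : R) : x = k%:~R + 2^-1 -> Lftul x k = Lftul x (k + 1).
Proof.
move=> ->; rewrite /Lftul.
have -> : b ^ (- k) = b ^ (- (k + 1)) * b by rewrite -powS; congr (_ ^ _); lia.
rewrite intrD; set c := b ^ _; field; exact: bp1.
Qed.

Lemma Sf_tie (k : int) (x : R) : x = k%:~R + 2^-1 -> Sftul x k = Sftul x (k + 1).
Proof.
move=> ->; rewrite /Sftul powS intrD; set c := b ^ _; field; exact: bp1.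
Qed.

Lemma Lf_cell (x : R) k j : cell x k -> cell x j -> Lftul x k = Lftul x j.
Proof.
move=> ck cj; case: (cell_cases ck cj) => [->//|[-> e]|[-> e]].
- exact: Lf_tie.
- exact/esym/Lf_tie.
Qed.

Lemma Sf_cell (x : R) k j : cell x k -> cell x j -> Sftul x k = Sftul x j.
Proof.
move=> ck cj; case: (cell_cases ck cj) => [->//|[-> e]|[-> e]].
- exact: Sf_tie.
- exact/esym/Sf_tie.
Qed.

Lemma L_def x : Ltul x = if x <= 0 then Lftul x (nearest_int x) else 1 - Sftul x (nearest_int x).
Proof.
rewrite /Ltul /tulap0_cdf /Lftul /Sftul.
have -> : nearest_int (0 : R) = 0 by rewrite -(NI_int R 0).
by rewrite !subr0.
Qed.

Lemma L_neg (x : R) k : cell x k -> x <= 0 -> Ltul x = Lftul x k.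
Proof. by move=> ck x0; rewrite L_def x0; apply: Lf_cell => //; apply: NI. Qed.

Lemma cell0 (x : R) k : cell x k -> x = 0 -> k = 0.
Proof.
move=> /andP[h1 h2] e; subst x.
have a : k%:~R < (1 : int)%:~R :> R by rewrite (_ : (1:int)%:~R = 1) //; lra.
have c : (-1 : int)%:~R < k%:~R :> R by rewrite (_ : (-1:int)%:~R = -1) //; lra.
rewrite ltr_int in a; rewrite ltr_int in c; lia.
Qed.

Lemma L_pos (x : R) k : cell x k -> 0 <= x -> Ltul x = 1 - Sftul x k.
Proof.
bb5; move=> ck x0; rewrite L_def; case: ifP => h.
- have e : x = 0 by lra.
  have -> := cell0 (NI x) e; have -> := cell0 ck e.
  rewrite e /Lftul /Sftul oppr0 !expr0z; field; exact: bp1.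
- by congr (_ - _); apply: Sf_cell => //; apply: NI.
Qed.

End Tul.


Section Tul2.
Variable R : realType.
Variable b : R.
Hypothesis b0 : 0 < b.
Hypothesis b1 : b < 1.
Ltac bb7 := have := b0; have := b1; move=> ? ?.

Local Notation L := (Ltul b).
Local Notation Lf := (Lftul b).
Local Notation Sf := (Sftul b).

Lemma cellN (x : R) k : cell x k -> cell (-x) (-k).
Proof. by rewrite /cell intrN => /andP[? ?]; apply/andP; split; lra. Qed.

Lemma cellB1 (x : R) k : cell x k -> cell (x - 1) (k - 1).
Proof. by rewrite /cell intrB => /andP[? ?]; apply/andP; split; lra. Qed.

Lemma cellD1 (x : R) k : cell x k -> cell (x + 1) (k + 1).
Proof. by rewrite /cell intrD => /andP[? ?]; apply/andP; split; lra. Qed.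

Lemma L_sym (x : R) : L (-x) = 1 - L x.
Proof.
have ck := NI x; set k := nearest_int x in ck.
have cnk := cellN ck.
case: (leP 0 x) => h.
- rewrite (L_pos b0 b1 ck h) (L_neg b0 b1 cnk) ?oppr_le0 //.
  rewrite /Lf /Sftul opprK intrN; ring.
- rewrite (L_neg b0 b1 ck (ltW h)) (L_pos b0 b1 cnk) ?oppr_ge0 ?(ltW h) //.
  rewrite /Lf /Sftul intrN opprK; ring.
Qed.

Lemma pow_anti (m n : int) : m <= n -> b ^ n <= b ^ m.
Proof.
bb7; move=> mn.
have -> : n = m + (`|n - m|%N)%:Z by rewrite gez0_abs ?subr_ge0 //; ring.
rewrite expfzDr ?bne0 //.
rewrite -[X in _ <= X]mulr1; apply: ler_wpM2l; first exact: exprz_ge0 (ltW b0).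
by apply: exprn_ile1; lra.
Qed.

Lemma int_lt (k j : int) : k < j -> k%:~R + 1 <= j%:~R :> R.
Proof. by move=> h; rewrite -intrD1 ler_int; lia. Qed.

Lemma L_mono_pos (x y : R) : 0 <= x -> x <= y -> L x <= L y.
Proof.
bb7; move=> x0 xy.
have ck := NI x; set k := nearest_int x in ck.
have cj := NI y; set j := nearest_int y in cj.
rewrite (L_pos b0 b1 ck x0) (L_pos b0 b1 cj) ?(le_trans x0 xy) //.
suff : Sf y j <= Sf x k by lra.
have pk : 0 <= b ^ k / (1 + b) by apply: divr_ge0; [exact: exprz_ge0 (ltW b0)| lra].
have pj : 0 <= b ^ j / (1 + b) by apply: divr_ge0; [exact: exprz_ge0 (ltW b0)| lra].
move: (ck) (cj); rewrite /cell => /andP[k1 k2] /andP[j1 j2].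
case: (ltgtP k j) => hkj.
- have h1 := int_lt hkj.
  have h2 : b ^ j <= b ^ (k + 1) by apply: pow_anti; lia.
  rewrite (powS b0) in h2.
  have e1 : b ^ k / (1 + b) * b <= Sf x k.
    rewrite /Sftul; apply: ler_wpM2l => //; nra.
  have e2 : Sf y j <= b ^ j / (1 + b) * 1.
    rewrite /Sftul; apply: ler_wpM2l => //; nra.
  have e3 : b ^ j / (1 + b) * 1 <= b ^ k / (1 + b) * b.
    rewrite mulr1 [X in _ <= X]mulrAC; apply: ler_wpM2r => //.
    by rewrite invr_ge0; lra.
  lra.
- have h1' := int_lt hkj.
  have e : x = y by lra.
  by rewrite e; apply/eqP; rewrite eq_le !(Sf_cell b0 b1 _ cj) ?lexx //; rewrite -e.
- rewrite hkj /Sftul; apply: ler_wpM2l => //; nra.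
Qed.

End Tul2.


Section Tul3.
Variable R : realType.
Variable b : R.
Hypothesis b0 : 0 < b.
Hypothesis b1 : b < 1.
Ltac bb8 := have := b0; have := b1; move=> ? ?.

Local Notation L := (Ltul b).
Local Notation Lf := (Lftul b).
Local Notation Sf := (Sftul b).

Let hb0 : b != 0 := bne0 b0.
Let hbp : 1 + b != 0 := bp1 b0 b1.

Lemma L_mono (x y : R) : x <= y -> L x <= L y.
Proof.
move=> xy; case: (leP 0 x) => hx; first exact: (L_mono_pos b0 b1).
case: (leP y 0) => hy.
- rewrite -(opprK x) -(opprK y) (L_sym b0 b1 (-x)) (L_sym b0 b1 (-y)).
  suff : L (- y) <= L (- x) by lra.
  by apply: (L_mono_pos b0 b1); lra.
- apply: (@le_trans _ _ (L 0)); last by apply: (L_mono_pos b0 b1); lra.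
  rewrite -(opprK x) (L_sym b0 b1 (-x)) -[X in _ <= L X]oppr0 (L_sym b0 b1 0).
  suff : L 0 <= L (- x) by lra.
  by apply: (L_mono_pos b0 b1); lra.
Qed.

Definition gtul (x : R) := b^-1 * L (x - 1) - L x.

Lemma Bb : b^-1 * b = 1. Proof. by rewrite mulVf // hb0. Qed.
Lemma B1 : 1 <= b^-1. Proof. by bb8; rewrite invr_ge1 ?unitfE ?hb0 //; lra. Qed.

Lemma g_neg (x : R) : x <= 0 -> gtul x = 0.
Proof.
bb8; move=> x0; have ck := NI x; set k := nearest_int x in ck.
rewrite /gtul (L_neg b0 b1 ck x0) (L_neg b0 b1 (cellB1 ck)); last lra.
have -> : Lf (x - 1) (k - 1) = b * Lf x k.
  rewrite /Lftul.
  have -> : - (k - 1) = - k + 1 by ring.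
  rewrite (powS b0) intrB; ring.
by rewrite mulrA Bb mul1r subrr.
Qed.

Lemma g_half (x : R) : 0 <= x -> x <= 2^-1 -> gtul x = 0.
Proof.
bb8; move=> x0 x1.
have c0 : cell x 0 by rewrite /cell; apply/andP; split; lra.
have c1 : cell (x - 1) (-1) by rewrite /cell; apply/andP; split; rewrite (_ : (-1 : int)%:~R = -1) //; lra.
rewrite /gtul (L_pos b0 b1 c0 x0) (L_neg b0 b1 c1); last lra.
rewrite /Lftul /Sftul opprK expr0z expr1z (_ : (-1 : int)%:~R = -1) //.
field; rewrite ?hb0 ?hbp //.
Qed.

Lemma g_mid (x y : R) : 2^-1 <= x -> x <= y -> y <= 1 -> gtul x <= gtul y.
Proof.
bb8; move=> x1 xy y1.
have gE z : 2^-1 <= z -> z <= 1 -> gtul z = b^-1 * ((1 + b)^-1 * (b + (z - 1 + 2^-1) * (1 - b))) - (1 - b / (1 + b) * (b + (1 - z + 2^-1) * (1 - b))).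
  move=> z1 z2.
  have c0 : cell (z - 1) 0 by rewrite /cell; apply/andP; split; lra.
  have c1 : cell z 1 by rewrite /cell; apply/andP; split; lra.
  rewrite /gtul (L_pos b0 b1 c1) ?(L_neg b0 b1 c0); [|lra|lra].
  rewrite /Lftul /Sftul oppr0 expr0z expr1z; field; rewrite ?hbp //.
rewrite (gE x) ?(gE y); try lra.
have e : forall z : R, b^-1 * ((1 + b)^-1 * (b + (z - 1 + 2^-1) * (1 - b))) - (1 - b / (1 + b) * (b + (1 - z + 2^-1) * (1 - b))) = z * ((1 - b) * (b^-1 - b) / (1 + b)) + (b^-1 * ((1 + b)^-1 * (b + (- 1 + 2^-1) * (1 - b))) - (1 - b / (1 + b) * (b + (1 + 2^-1) * (1 - b)))).
  move=> z; field; rewrite ?hbp //.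
rewrite !e; suff : x * ((1 - b) * (b^-1 - b) / (1 + b)) <= y * ((1 - b) * (b^-1 - b) / (1 + b)) by lra.
apply: ler_wpM2r => //.
have := B1; move=> ?.
apply: divr_ge0; [apply: mulr_ge0|]; lra.
Qed.

Lemma g_big (x : R) : 1 <= x -> gtul x = b^-1 - 1 - (b^-1 - b) * (1 - L (x - 1)).
Proof.
bb8; move=> x1; have ck := NI x; set k := nearest_int x in ck.
have ck1 := cellB1 ck.
rewrite /gtul (L_pos b0 b1 ck) ?(L_pos b0 b1 ck1); [|lra|lra].
have -> : Sf x k = b * Sf (x - 1) (k - 1).
  rewrite /Sftul.
  have {1}-> : k = (k - 1) + 1 by ring.
  rewrite (powS b0) intrB; ring.
ring.
Qed.

End Tul3.


Section Tul4.
Variable R : realType.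
Variable b : R.
Hypothesis b0 : 0 < b.
Hypothesis b1 : b < 1.
Ltac bb9 := have := b0; have := b1; move=> ? ?.

Local Notation L := (Ltul b).
Local Notation g := (gtul b).

Lemma g_zero (z : R) : z <= 2^-1 -> g z = 0.
Proof.
move=> h; case: (leP z 0) => h0; first exact: (g_neg b0 b1).
by apply: (g_half b0 b1) => //; lra.
Qed.

Lemma g_mono (x y : R) : x <= y -> g x <= g y.
Proof.
bb9; move=> xy; case: (leP y (2^-1)) => hy.
  by rewrite !g_zero //; lra.
have hbig u v : 1 <= u -> u <= v -> g u <= g v.
  move=> u1 uv; rewrite (g_big b0 b1 u1) (g_big b0 b1) ?(le_trans u1 uv) //.
  have := L_mono b0 b1 (_ : u - 1 <= v - 1); have := B1 b0 b1; move=> ? h.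
  have := h ltac:(lra) => {}h.
  suff : (b^-1 - b) * (1 - L (v - 1)) <= (b^-1 - b) * (1 - L (u - 1)) by lra.
  apply: ler_wpM2l; lra.
have hhalf u v : 2^-1 <= u -> u <= v -> g u <= g v.
  move=> u1 uv; case: (leP v 1) => v1; first exact: (g_mid b0 b1).
  case: (leP 1 u) => u2; first exact: hbig.
  apply: (@le_trans _ _ (g 1)); first by apply: (g_mid b0 b1); lra.
  by apply: hbig; lra.
case: (leP (2^-1) x) => hx; first exact: hhalf.
rewrite g_zero; last lra.
rewrite -(g_zero (lexx (2^-1))); apply: hhalf; lra.
Qed.

Lemma g_ge0 (x : R) : 0 <= g x.
Proof.
case: (leP x 0) => h; first by rewrite (g_neg b0 b1 h).
by rewrite -(g_neg b0 b1 (lexx 0)); apply: g_mono; lra.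
Qed.

Lemma L4 (x : R) : L x <= b^-1 * L (x - 1).
Proof. by have := g_ge0 x; rewrite /gtul; lra. Qed.

Lemma g2E (x : R) : b^-1 * L (x + 1) - L x = b^-1 - 1 - g (- x).
Proof.
rewrite /gtul.
have e1 : L (x + 1) = 1 - L (- x - 1) by rewrite -opprD (L_sym b0 b1); ring.
have e2 : L x = 1 - L (- x) by rewrite (L_sym b0 b1); ring.
rewrite e1 e2; ring.
Qed.

Lemma g2_mono (x y : R) : x <= y -> b^-1 * L (x + 1) - L x <= b^-1 * L (y + 1) - L y.
Proof.
move=> xy; rewrite !g2E; have := g_mono (_ : - y <= - x); move=> h; have := h ltac:(lra); lra.
Qed.

Lemma L5 (x : R) : 1 - L x <= b^-1 * (1 - L (x + 1)).
Proof.
have e1 : 1 - L (x + 1) = L (- x - 1) by rewrite -opprD (L_sym b0 b1).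
have e2 : 1 - L x = L (- x) by rewrite (L_sym b0 b1).
rewrite e1 e2; exact: L4.
Qed.

Lemma L_shift (m : int) (x : R) : tulap0_cdf m%:~R b x = L (x - m%:~R).
Proof.
rewrite /Ltul /tulap0_cdf NI_int.
have -> : nearest_int (0 : R) = 0 by rewrite -(NI_int R 0).
by rewrite subr_le0 !subr0.
Qed.

End Tul4.


Section S.
Variable R : realFieldType.
Definition clamp (y : R) : R := if y < 0 then 0 else if 1 < y then 1 else y.

Lemma clampP (y : R) : [\/ y < 0 /\ clamp y = 0, (0 <= y <= 1) /\ clamp y = y | 1 < y /\ clamp y = 1].
Proof.
rewrite /clamp; case: ltP => h; first by constructor 1.
case: ltP => h2; first by constructor 3. by constructor 2; split => //; apply/andP; split.
Qed.

Lemma clamp_facts (v1 v2 : R) : v1 <= v2 ->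
  [/\ clamp v1 <= clamp v2, clamp v2 - clamp v1 <= v2 - v1, 0 <= clamp v1 & clamp v2 <= 1].
Proof.
move=> h; case: (clampP v1) => -[h1 ->]; case: (clampP v2) => -[h2 ->];
 try (move/andP: h1 => [? ?]); try (move/andP: h2 => [? ?]); split; lra.
Qed.

Lemma clamp_ge (v : R) : v <= 1 -> v <= clamp v.
Proof. by move=> h; case: (clampP v) => -[h1 ->]; try (move/andP: h1 => [? ?]); lra. Qed.
Lemma clamp_le (v : R) : 0 <= v -> clamp v <= v.
Proof. by move=> h; case: (clampP v) => -[h1 ->]; try (move/andP: h1 => [? ?]); lra. Qed.

Lemma Bfacts (y B : R) : 1 <= B -> [/\ y <= 0 -> B * y <= y, 0 <= y -> y <= B * y,
   y <= 1 -> B * y - y <= B - 1 & 1 <= y -> B - 1 <= B * y - y].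
Proof.
move=> B1; have e : B * y - y = (B - 1) * y by ring.
split=> h.
- have : (B - 1) * y <= 0 by apply: mulr_ge0_le0; lra.
  lra.
- have : 0 <= (B - 1) * y by apply: mulr_ge0; lra.
  lra.
- rewrite e -{2}(mulr1 (B - 1)); apply: ler_wpM2l; lra.
- rewrite e -{1}(mulr1 (B - 1)); apply: ler_wpM2l; lra.
Qed.

Definition psi (d v : R) := Num.max (clamp v - d) 0.
Definition chi (d v : R) := Num.min (clamp v) (1 - d).

Lemma psi_lip d v1 v2 : v1 <= v2 -> 0 <= psi d v2 - psi d v1 <= clamp v2 - clamp v1.
Proof.
move=> h; have [h1 _ _ _] := clamp_facts h; rewrite /psi.
by rewrite !maxElt; do 2 case: ltP => ?; apply/andP; split; lra.
Qed.

Lemma chi_lip d v1 v2 : v1 <= v2 -> 0 <= chi d v2 - chi d v1 <= clamp v2 - clamp v1.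
Proof.
move=> h; have [h1 _ _ _] := clamp_facts h; rewrite /chi.
by rewrite !minElt; do 2 case: ltP => ?; apply/andP; split; lra.
Qed.

Lemma psi_facts d v : 0 <= d -> [/\ v <= d -> psi d v = 0, 0 <= psi d v, psi d v <= clamp v &
   forall w, 0 <= w -> v <= w + d -> psi d v <= w].
Proof.
move=> d0; have [_ _ c0 c1] := clamp_facts (lexx v); rewrite /psi; split.
- move=> h; rewrite maxElt; case: ltP => // h2.
  by case: (clampP v) => -[h1 e]; rewrite e in h2 *; try (move/andP: h1 => [? ?]); lra.
- by rewrite le_max lexx orbT.
- by rewrite ge_max c0 andbT; lra.
- move=> w w0 h; rewrite ge_max w0 andbT.
  by case: (clampP v) => -[h1 ->]; try (move/andP: h1 => [? ?]); lra.
Qed.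

Lemma chi_facts d v : 0 <= d -> [/\ 1 - d <= v -> chi d v = 1 - d, chi d v <= 1 - d, 1 - d - chi d v <= 1 &
   forall w, 0 <= w -> 1 - d - v <= w -> v <= 1 -> 1 - d - chi d v <= w].
Proof.
move=> d0; have [_ _ c0 c1] := clamp_facts (lexx v); rewrite /chi; split.
- move=> h; rewrite minElt; case: ltP => // h2.
  by case: (clampP v) => -[h1 e]; rewrite e in h2 *; try (move/andP: h1 => [? ?]); lra.
- by rewrite ge_min lexx orbT.
- by rewrite minElt; case: ltP => ?; lra.
- move=> w w0 h v1; rewrite minElt; case: ltP => ?; last lra.
  have := clamp_ge v1; lra.
Qed.

Lemma key_plus (B d s t s' t' : R) : 1 <= B -> 0 <= d -> s <= t -> s' <= t' -> s <= s' -> t <= t' ->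
  s' <= B * s + d -> t' <= B * t + d -> t' - s' <= B * t - B * s ->
  B * clamp s + Num.min (clamp s') d - clamp s' <= B * clamp t + Num.min (clamp t') d - clamp t'.
Proof.
move=> B1 d0 st st' ss' tt' hs ht hst.
have E x : Num.min x d - x = - Num.max (x - d) 0.
  by rewrite minElt maxElt; case: ltP => ?; case: ltP => ?; lra.
rewrite -!addrA !E -/(psi d s') -/(psi d t').
have [Bs1 Bs2 Bs3 Bs4] := @Bfacts s B B1; have [Bt1 Bt2 Bt3 Bt4] := @Bfacts t B B1.
have Bst : B * s <= B * t by apply: ler_wpM2l => //; lra.
have /andP[L1 L2] := psi_lip d st'.
have [c1 c2 c3 c4] := clamp_facts st'.
have [c5 _ _ _] := clamp_facts ss'.
have [P1 P2 P3 P4] := psi_facts s' d0.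
have [Q1 Q2 Q3 Q4] := psi_facts t' d0.
case: (clampP s) => -[h1 e1]; case: (clampP t) => -[h2 e2]; rewrite e1 e2 in c5 *;
  try (move/andP: h1 => [? ?]); try (move/andP: h2 => [? ?]).
- have := Bs1 (ltW h1); have := Bt1 (ltW h2); move=> ? ?.
  rewrite P1; last lra. rewrite Q1; lra.
- have := Bs1 (ltW h1); have := Bt2 ltac:(lra); move=> ? ?.
  rewrite P1; last lra. have := Q4 (B * t) ltac:(lra) ltac:(lra); lra.
- have := Bs1 (ltW h1); move=> ?.
  rewrite P1; last lra. lra.
- lra.
- lra.
- have := Bs3 ltac:(lra); lra.
- lra.
- lra.
- lra.
Qed.

Lemma key_minus (B d s t s' t' : R) : 1 <= B -> 0 <= d -> s <= t -> s' <= t' -> s' <= s -> t' <= t ->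
  1 - s' <= B * (1 - s) + d -> 1 - t' <= B * (1 - t) + d -> t' - s' <= B * t - B * s ->
  B * clamp s + Num.max (clamp s' - 1 + d) 0 - clamp s' <= B * clamp t + Num.max (clamp t' - 1 + d) 0 - clamp t'.
Proof.
move=> B1 d0 st st' ss' tt' hs ht hst.
have E x y : B * y + Num.max (clamp x - 1 + d) 0 - clamp x = B * y - chi d x.
  by rewrite /chi minElt maxElt; case: ltP => ?; case: ltP => ?; lra.
rewrite !E.
have [Bs1 Bs2 Bs3 Bs4] := @Bfacts s B B1; have [Bt1 Bt2 Bt3 Bt4] := @Bfacts t B B1.
have Bst : B * s <= B * t by apply: ler_wpM2l => //; lra.
have Bs5 : B * (1 - s) = B - B * s by ring.
have Bt5 : B * (1 - t) = B - B * t by ring.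
have /andP[L1 L2] := chi_lip d st'.
have [c1 c2 c3 c4] := clamp_facts st'.
have [c5 _ _ _] := clamp_facts tt'.
have [c6 _ _ _] := clamp_facts ss'.
have [P1 P2 P3 P4] := chi_facts s' d0.
have [Q1 Q2 Q3 Q4] := chi_facts t' d0.
case: (clampP s) => -[h1 e1]; case: (clampP t) => -[h2 e2]; rewrite e1 e2 in c5 c6 *;
  try (move/andP: h1 => [? ?]); try (move/andP: h2 => [? ?]).
- lra.
- have := Bt2 ltac:(lra); lra.
- have := Bt4 (ltW h2); move=> ?.
  rewrite Q1; last lra. lra.
- lra.
- lra.
- have := Bt4 (ltW h2); have := Bs3 ltac:(lra); move=> ? ?.
  rewrite Q1; last lra. have := P4 (B * (1 - s)) ltac:(lra) ltac:(lra) ltac:(lra); lra.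
- lra.
- lra.
- have := Bt4 (ltW h2); have := Bs4 (ltW h1); move=> ? ?.
  rewrite Q1; last lra. rewrite P1; last lra. lra.
Qed.
End S.


Section ToR.
Context (R : realType).
Context (m : {measure set (measurableTypeR R) -> \bar R}).
Definition toR : set R -> \bar R := m.
HB.instance Definition _ := isMeasure.Build _ _ _ toR (measure0 m) (measure_ge0 m) (@measure_semi_sigma_additive _ _ _ m).
End ToR.

Section IdRV.
Context (R : realType).
Definition idTR : R -> R := idfun.
HB.instance Definition _ := @isMeasurableFun.Build _ _ _ _ idTR (@measurable_id _ R setT).
End IdRV.

Section CdfRC.
Context (R : realType) (mu : probability R R) (F : R -> R).
Hypothesis HF : forall x, mu `]-oo, x]%classic = (F x)%:E.

Lemma cdf_rc : right_continuous F.
Proof.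
have -> : F = fun r => fine (cdf (@idTR R : {RV mu >-> R}) r).
  apply/funext => r; rewrite /cdf /distribution /pushforward /idTR /= preimage_id HF //.
move=> a; apply: fine_cvg.
by rewrite fineK ?fin_num_measure//; exact: cdf_right_continuous.
Qed.

Lemma cdf_itv (a c : R) : a <= c -> mu `]a, c]%classic = ((F c)%:E - (F a)%:E)%E.
Proof.
move=> ac.
have -> : `]a, c]%classic = `]-oo, c] `\` `]-oo, a].
  by rewrite -[RHS]setCK setCD setCitvl setUC -[LHS]setCK setCitv.
rewrite measureD ?setIidr//.
- by have := HF c; have := HF a; move=> e1 e2; rewrite [X in (X - _)%E]e2 [X in (_ - X)%E]e1.
- exact: subset_itvl.
- by rewrite -ge0_fin_numE// fin_num_measure.
Qed.

Lemma cdf_nd : {homo F : x y / x <= y}.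
Proof.
move=> x y xy; rewrite -lee_fin -!HF; apply: le_measure; rewrite ?inE //.
by apply: subset_itvl; rewrite bnd_simp.
Qed.

Lemma cdf_ge0 x : 0 <= F x.
Proof. by rewrite -lee_fin -HF. Qed.

Lemma cdf_le1 x : F x <= 1.
Proof. by rewrite -lee_fin -HF; exact: probability_le1. Qed.

End CdfRC.

Lemma LS_itv (R : realType) (f : cumulative R R) (a c : R) : a <= c ->
  lebesgue_stieltjes_measure f `]a, c]%classic = ((f c)%:E - (f a)%:E)%E.
Proof.
move=> ac; rewrite /lebesgue_stieltjes_measure /measure_extension/=.
rewrite measurable_mu_extE/=; last exact: is_ocitv.
by rewrite wlength_itv_bnd.
Qed.


Section Gen.
Context (R : realType) (mu nu : probability R R) (B0 d : R) (F G Phi : R -> R).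
Hypothesis B0ge : 0 <= B0.
Hypothesis HF : forall x, mu `]-oo, x]%classic = (F x)%:E.
Hypothesis HG : forall x, nu `]-oo, x]%classic = (G x)%:E.
Hypothesis Phind : {homo Phi : x y / x <= y}.
Hypothesis Phirc : right_continuous Phi.
Hypothesis Phi0 : forall x, 0 <= Phi x.
Hypothesis Phid : forall x, Phi x <= d.
Hypothesis kapnd : {homo (fun x => B0 * G x + Phi x - F x) : x y / x <= y}.

Definition kap x := B0 * G x + Phi x - F x.
Definition phic x := Phi x.

Let kap_nd : {homo kap : x y / x <= y}. Proof. exact: kapnd. Qed.
Let phic_nd : {homo phic : x y / x <= y}. Proof. exact: Phind. Qed.
Let phic_rc : right_continuous phic. Proof. exact: Phirc. Qed.

Let kap_rc : right_continuous kap.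
Proof.
move=> x.
have hG := @cdf_rc R nu G HG x; have hF := @cdf_rc R mu F HF x; have hP := @Phirc x.
have h1 : (fun y => B0 * G y) @ at_right x --> B0 * G x by apply: cvgMr.
have h2 : (fun y => B0 * G y + Phi y) @ at_right x --> B0 * G x + Phi x by apply: cvgD.
have h3 : (fun y => B0 * G y + Phi y - F y) @ at_right x --> B0 * G x + Phi x - F x by apply: cvgB.
exact: h3.
Qed.

HB.instance Definition _ := isCumulative.Build R _ R kap kap_nd kap_rc.
HB.instance Definition _ := isCumulative.Build R _ R phic phic_nd phic_rc.

Definition lam := toR (lebesgue_stieltjes_measure kap).
Definition rho := toR (lebesgue_stieltjes_measure phic).
Definition B0nn : {nonneg R} := NngNum B0ge.
Definition m1 := measure_add mu lam.
Definition m2 := measure_add (mscale B0nn nu) rho.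

Lemma lam_itv (a c : R) : a <= c -> lam `]a, c]%classic = ((kap c)%:E - (kap a)%:E)%E.
Proof. exact: LS_itv. Qed.
Lemma rho_itv (a c : R) : a <= c -> rho `]a, c]%classic = ((phic c)%:E - (phic a)%:E)%E.
Proof. exact: LS_itv. Qed.

Lemma m1m2 A : measurable A -> m1 A = m2 A.
Proof.
move=> mA.
have key : forall X, ocitv X -> m1 X = m2 X.
  move=> X [[a c]] _ <-{X} /=.
  have [ac | ca] := leP a c; last first.
    rewrite set_itv_ge; first by rewrite /m1 /m2 !measure_addE /mscale /= !measure0 ?mule0 ?adde0.
    by rewrite bnd_simp -leNgt ltW.
  rewrite /m1 /m2 !measure_addE.
  change (mu `]a,c]%classic + lam `]a,c]%classic = B0%:E * nu `]a,c]%classic + rho `]a,c]%classic)%E.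
  rewrite lam_itv // rho_itv // (cdf_itv HF) // /mscale /=.
  rewrite (cdf_itv HG) //= /kap /phic; rewrite -!EFinB -EFinM -!EFinD; congr EFin; ring.
have fin : forall k : nat, (m1 `](- k%:R)%R, k%:R%R]%classic < +oo)%E.
  move=> k; have hk0 : (0 : R) <= k%:R by [].
  have hk : - (k%:R : R) <= k%:R by lra.
  rewrite /m1 measure_addE.
  change (mu `](- k%:R)%R, k%:R%R]%classic + lam `](- k%:R)%R, k%:R%R]%classic < +oo)%E.
  by rewrite lam_itv // (cdf_itv HF) // -!EFinB -EFinD ltry.
apply: (measure_unique (@ocitv R) (fun k : nat => `](- k%:R), k%:R]%classic)) => //.
all: try exact: ocitvI; try exact: key; try exact: fin; try (by move=> k; exact: is_ocitv).
rewrite -subTset => /= x _ /=.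
  exists (Num.trunc `|x|).+1 => //=; rewrite in_itv /=.
  have h := truncnS_gt `|x|; have h1 := ler_norm x; have h2 := ler_norm (- x).
  rewrite normrN in h2; apply/andP; split; lra.
Qed.

Lemma rho_le A : measurable A -> (rho A <= d%:E)%E.
Proof.
move=> mA.
apply: (@le_trans _ _ (rho setT)); first by apply: le_measure; rewrite ?inE.
have hU : \bigcup_n `](- n%:R), n%:R]%classic = [set: R].
  rewrite -subTset => /= x _ /=.
  exists (Num.trunc `|x|).+1 => //=; rewrite in_itv /=.
  have h := truncnS_gt `|x|; have h1 := ler_norm x; have h2 := ler_norm (- x).
  rewrite normrN in h2; apply/andP; split; lra.
have hc : rho `](- n%:R), n%:R]%classic @[n --> \oo] --> rho (\bigcup_n `](- n%:R), n%:R]%classic).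
  apply: nondecreasing_cvg_mu => //; first exact: bigcup_measurable.
  move=> n m nm; have h : (n%:R : R) <= m%:R by rewrite ler_nat.
  by apply/subsetPset/subset_itv; rewrite bnd_simp; lra.
rewrite hU in hc; rewrite -(cvg_lim _ hc) //.
apply: lime_le; first by apply/cvg_ex; eexists; exact: hc.
near=> n.
rewrite rho_itv; last first.
  have : (0 : R) <= n%:R by [].
  lra.
rewrite -EFinB lee_fin /phic; have := Phi0 (- n%:R); have := Phid n%:R; lra.
Unshelve. all: by end_near.
Qed.

Theorem gen_dp A : measurable A -> (mu A <= B0%:E * nu A + d%:E)%E.
Proof.
move=> mA.
apply: (@le_trans _ _ (m1 A)).
  by rewrite /m1 measure_addE; apply: leeDl; exact: measure_ge0.
rewrite (m1m2 mA) /m2 measure_addE /mscale /=.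
by apply: leeD2l; exact: rho_le.
Qed.

End Gen.


Section RC.
Context (R : realType).
Lemma rc_min (f : R -> R) (c : R) : right_continuous f -> right_continuous (fun x => Num.min (f x) c).
Proof.
move=> h x.
under eq_fun => ? do rewrite minr_absE.
rewrite ?minr_absE.
apply: cvgM; [|exact: cvg_cst]; apply: cvgD; first by apply: cvgD; [exact: h|exact: cvg_cst].
by apply: cvgN; apply: cvg_norm; apply: cvgB; [exact: h|exact: cvg_cst].
Qed.

Lemma rc_max (f : R -> R) (c : R) : right_continuous f -> right_continuous (fun x => Num.max (f x) c).
Proof.
move=> h x.
under eq_fun => ? do rewrite maxr_absE.
rewrite ?maxr_absE.
apply: cvgM; [|exact: cvg_cst]; apply: cvgD; first by apply: cvgD; [exact: h|exact: cvg_cst].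
by apply: cvg_norm; apply: cvgB; [exact: h|exact: cvg_cst].
Qed.

Lemma rc_shift (f : R -> R) (c : R) : right_continuous f -> right_continuous (fun x => f x - 1 + c).
Proof.
move=> h x.
by apply: cvgD; [apply: cvgB; [exact: h|exact: cvg_cst]|exact: cvg_cst].
Qed.
End RC.

Section Aff.
Context (R : realType) (q B d : R).
Hypothesis q0 : 0 <= q.
Hypothesis q1 : q < 1.
Hypothesis Bd : d = (B - 1) * q / (2 * (1 - q)).
Definition Aq (v : R) := (v - q / 2) / (1 - q).

Let qn : 1 - q != 0. Proof. by rewrite subr_eq0 eq_sym lt_eqF. Qed.
Let qp : 0 < (1 - q)^-1. Proof. by rewrite invr_gt0 subr_gt0. Qed.

Lemma Aq_mono v w : v <= w -> Aq v <= Aq w.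
Proof. by move=> h; rewrite /Aq; apply: ler_wpM2r; [exact: ltW|lra]. Qed.

Lemma Aq_B v w : v <= B * w -> Aq v <= B * Aq w + d.
Proof.
move=> h; apply: (@le_trans _ _ (Aq (B * w))); first exact: Aq_mono.
by rewrite /Aq Bd le_eqVlt; apply/orP; left; apply/eqP; field; rewrite qn.
Qed.

Lemma Aq_diff v1 v2 w1 w2 : v2 - v1 <= B * (w2 - w1) -> Aq v2 - Aq v1 <= B * Aq w2 - B * Aq w1.
Proof.
move=> h.
have -> : Aq v2 - Aq v1 = (v2 - v1) / (1 - q) by rewrite /Aq; field; rewrite qn.
have -> : B * Aq w2 - B * Aq w1 = B * (w2 - w1) / (1 - q) by rewrite /Aq; field; rewrite qn.
by apply: ler_wpM2r; [exact: ltW|].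
Qed.

Lemma Aq_compl v : 1 - Aq v = Aq (1 - v).
Proof. by rewrite /Aq; field; rewrite qn. Qed.

Lemma phiE (t : R) : (if (q / 2 <= t) && (t <= 1 - q / 2) then (t - q / 2) / (1 - q) else 0)
  + (if t > 1 - q / 2 then 1 else 0) = clamp (Aq t).
Proof.
have := q0; have := q1; move=> ? ?.
have hq : 0 < 1 - q by lra.
rewrite /clamp /Aq.
have ha0 : ((t - q / 2) / (1 - q) < 0) = (t < q / 2).
  by rewrite pmulr_llt0 ?invr_gt0 // subr_lt0.
have ha1 : (1 < (t - q / 2) / (1 - q)) = (1 - q / 2 < t).
  by rewrite ltr_pdivlMr // mul1r; apply/idP/idP => ?; lra.
rewrite ha0 ha1.
case: (ltP t (q / 2)) => h1; case: (ltP (1 - q / 2) t) => h2 /=; rewrite ?addr0 ?add0r //; lra.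
Qed.
End Aff.


Unset Implicit Arguments. Set Strict Implicit.

Lemma FE (R : realType) (b q : R) (z : int) (x : R) : 0 <= q -> q < 1 ->
  tulap_cdf z%:~R b q x = clamp (Aq q (Ltul b (x - z%:~R))).
Proof. by move=> q0 q1; rewrite /tulap_cdf /= phiE // L_shift. Qed.

Theorem theorem2 (R : realType) (eps delta : R) (n : nat) (Xs : Type)
    (T : ('I_n -> Xs) -> int)
    (P : ('I_n -> Xs) -> probability R R) :
  0 < eps -> 0 <= delta -> (1 <= n)%N ->
  ereal_sup ((fun p : ('I_n -> Xs) * ('I_n -> Xs) =>
                 ((`|T p.1 - T p.2|%:~R : R)%:E))
              @` [set p | hamming p.1 p.2 = 1%N]) = 1%E ->
  (forall (X : 'I_n -> Xs) (x : R),
     P X `]-oo, x]%classic =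
       (tulap_cdf (T X)%:~R (expR (- eps))
          (2 * delta * expR (- eps) / (1 - expR (- eps) + 2 * delta * expR (- eps))) x)%:E) ->
  diff_private eps delta P.
Proof.
move=> eps0 del0 n1 Hsup HP A mA X X' hXX'.
set b := expR (- eps) in HP.
set q := 2 * delta * b / (1 - b + 2 * delta * b) in HP.
have b0 : 0 < b := expR_gt0 _.
have b1 : b < 1 by rewrite /b expR_lt1 oppr_lt0.
have Bb : expR eps = b^-1 by rewrite /b expRN invrK.
have db : 0 <= delta * b by apply: mulr_ge0 => //; exact: ltW.
have den : 0 < 1 - b + 2 * delta * b by lra.
have q0 : 0 <= q by rewrite /q; apply: divr_ge0; lra.
have q1 : q < 1 by rewrite /q ltr_pdivrMr // mul1r; lra.
have Bd : delta = (b^-1 - 1) * q / (2 * (1 - q)).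
  have e1 : 1 - q = (1 - b) / (1 - b + 2 * delta * b).
    by rewrite /q; field; rewrite gt_eqF.
  rewrite e1 /q; field.
  by apply/and3P; split; apply/eqP => h; lra.
have BB1 : 1 <= b^-1 := B1 b0 b1.
have hT : ((`|T X - T X'|%:~R : R)%:E <= 1%E)%E.
  rewrite -Hsup; apply: ereal_sup_ubound; by exists (X, X').
rewrite lee_fin (_ : (1 : R) = (1 : int)%:~R) // ler_int in hT.
set m := T X in hT *; set m' := T X' in hT *.
pose F : R -> R := fun x => clamp (Aq q (Ltul b (x - m%:~R))).
pose G : R -> R := fun x => clamp (Aq q (Ltul b (x - m'%:~R))).
have HF : forall x, P X `]-oo, x]%classic = (F x)%:E.
  by move=> x; rewrite HP FE.
have HG : forall x, P X' `]-oo, x]%classic = (G x)%:E.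
  by move=> x; rewrite HP FE.
have Fnd := cdf_nd HF; have Fge0 := cdf_ge0 HF; have Fle1 := cdf_le1 HF.
have Frc := cdf_rc HF.
have hc : [\/ m' = m, m' = m + 1 | m' = m - 1].
  have : m' = m \/ m' = m + 1 \/ m' = m - 1 by lia.
  by case=> [->|[->|->]]; [constructor 1|constructor 2|constructor 3].
rewrite Bb.
case: hc => hm.
-
  apply: (@gen_dp R (P X) (P X') (b^-1) delta F G (fun x => Num.min (F x) delta)) => //.
  + lra.
  + move=> x y xy /=; have h := Fnd x y xy; rewrite !minElt.
    by case: (ltP (F x) delta) => ?; case: (ltP (F y) delta) => ?; lra.
  + exact: rc_min.
  + by move=> x; rewrite le_min Fge0.
  + by move=> x; rewrite ge_min lexx orbT.
  + move=> x y xy /=.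
    have eFG : G = F by rewrite /G /F hm.
    rewrite eFG; have h := Fnd x y xy.
    have h2 : b^-1 * F x <= b^-1 * F y by apply: ler_wpM2l => //; lra.
    have h3 : F y - F x <= b^-1 * F y - b^-1 * F x.
      have : 0 <= (b^-1 - 1) * (F y - F x) by apply: mulr_ge0; lra.
      rewrite mulrBl !mulrBr !mul1r; lra.
    rewrite !minElt; case: (ltP (F x) delta) => ?; case: (ltP (F y) delta) => ?; lra.
-
  apply: (@gen_dp R (P X) (P X') (b^-1) delta F G (fun x => Num.min (F x) delta)) => //.
  + lra.
  + move=> x y xy /=; have h := Fnd x y xy; rewrite !minElt.
    by case: (ltP (F x) delta) => ?; case: (ltP (F y) delta) => ?; lra.
  + exact: rc_min.
  + by move=> x; rewrite le_min Fge0.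
  + by move=> x; rewrite ge_min lexx orbT.
  + move=> x y xy /=.
    have eG z : G z = clamp (Aq q (Ltul b ((z - m%:~R) - 1))).
      by rewrite /G hm intrD; congr (clamp (Aq q (Ltul b _))); ring.
    rewrite !eG /F.
    set x' := x - m%:~R; set y' := y - m%:~R.
    have xy' : x' <= y' by rewrite /x' /y'; lra.
    apply: key_plus => //.
    * by apply: Aq_mono => //; apply: (L_mono b0 b1); lra.
    * by apply: Aq_mono => //; apply: (L_mono b0 b1); lra.
    * by apply: Aq_mono => //; apply: (L_mono b0 b1); lra.
    * by apply: Aq_mono => //; apply: (L_mono b0 b1); lra.
    * by apply: Aq_B => //; apply: (L4 b0 b1).
    * by apply: Aq_B => //; apply: (L4 b0 b1).
    * apply: Aq_diff => //.
      have := g_mono b0 b1 xy'; rewrite /gtul mulrBr; lra.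
-
  apply: (@gen_dp R (P X) (P X') (b^-1) delta F G (fun x => Num.max (F x - 1 + delta) 0)) => //.
  + lra.
  + move=> x y xy /=; have h := Fnd x y xy; rewrite !maxElt.
    by case: (ltP (F x - 1 + delta) 0) => ?; case: (ltP (F y - 1 + delta) 0) => ?; lra.
  + exact/rc_max/rc_shift.
  + by move=> x; rewrite le_max lexx orbT.
  + by move=> x; rewrite ge_max del0 andbT; have := Fle1 x; lra.
  + move=> x y xy /=.
    have eG z : G z = clamp (Aq q (Ltul b ((z - m%:~R) + 1))).
      by rewrite /G hm intrB; congr (clamp (Aq q (Ltul b _))); ring.
    rewrite !eG /F.
    set x' := x - m%:~R; set y' := y - m%:~R.
    have xy' : x' <= y' by rewrite /x' /y'; lra.
    apply: key_minus => //.
    * by apply: Aq_mono => //; apply: (L_mono b0 b1); lra.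
    * by apply: Aq_mono => //; apply: (L_mono b0 b1); lra.
    * by apply: Aq_mono => //; apply: (L_mono b0 b1); lra.
    * by apply: Aq_mono => //; apply: (L_mono b0 b1); lra.
    * by rewrite (Aq_compl q1) (Aq_compl q1); apply: Aq_B => //; apply: (L5 b0 b1).
    * by rewrite (Aq_compl q1) (Aq_compl q1); apply: Aq_B => //; apply: (L5 b0 b1).
    * apply: Aq_diff => //.
      have := g2_mono b0 b1 xy'; rewrite mulrBr; lra.
Qed.
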